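(* Let $\mathcal{C}$ be an abelian category and $\mathcal{A}$ the abelian category whose objects are complexes $[A\xrightarrow{f}B\xrightarrow{g}C]$ in $\mathcal{C}$ (degrees $-2,-1,0$) with $f$ injective and $\operatorname{Ker} g=\operatorname{Im} f$, morphisms being chain maps modulo homotopy. If $[D\to I\to J]$ is an object of $\mathcal{A}$ with $I$ and $J$ injective objects of $\mathcal{C}$, then $[D\to I\to J]$ is an injective object of $\mathcal{A}$.
   Context: $\mathcal{A}$ is the heart of the $t$-structure on $K^b(\mathcal{C})$ with $D^{\leq 0}=\{X: X^i=0,\ i>0\}$ and $D^{\geq 0}=\{X: X^i=0,\ i<-2,\ H^{-2}(X)=H^{-1}(X)=0\}$. *)

(* Defs.v *)
From mathcomp Require Import all_boot all_algebra.
Set Implicit Arguments. Unset Strict Implicit. Unset Printing Implicit Defensive.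
Import GRing.Theory.
Local Open Scope ring_scope.

Record PreAdd := {
  Ob : Type;
  Hom : Ob -> Ob -> zmodType;
  comp : forall X Y Z : Ob, Hom Y Z -> Hom X Y -> Hom X Z;
  idm : forall X : Ob, Hom X X;
  compA : forall X Y Z W (h : Hom Z W) (g : Hom Y Z) (f : Hom X Y),
      comp h (comp g f) = comp (comp h g) f;
  comp1m : forall X Y (f : Hom X Y), comp (idm Y) f = f;
  compm1 : forall X Y (f : Hom X Y), comp f (idm X) = f;
  compDl : forall X Y Z (g1 g2 : Hom Y Z) (f : Hom X Y),
      comp (g1 + g2) f = comp g1 f + comp g2 f;
  compDr : forall X Y Z (g : Hom Y Z) (f1 f2 : Hom X Y),
      comp g (f1 + f2) = comp g f1 + comp g f2
}.

Arguments comp {p X Y Z}.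
Arguments idm {p}.
Arguments Hom : clear implicits.

Section Basic.
Variable C : PreAdd.

Definition mono X Y (f : Hom C X Y) : Prop :=
  forall W (u v : Hom C W X), comp f u = comp f v -> u = v.
Definition epi X Y (f : Hom C X Y) : Prop :=
  forall W (u v : Hom C Y W), comp u f = comp v f -> u = v.

Definition is_kernel X Y K (f : Hom C X Y) (k : Hom C K X) : Prop :=
  comp f k = 0 /\
  forall W (h : Hom C W X), comp f h = 0 ->
    exists u : Hom C W K, comp k u = h /\ forall u', comp k u' = h -> u' = u.

Definition is_cokernel X Y Q (f : Hom C X Y) (q : Hom C Y Q) : Prop :=
  comp q f = 0 /\
  forall W (h : Hom C Y W), comp h f = 0 ->
    exists u : Hom C Q W, comp u q = h /\ forall u', comp u' q = h -> u' = u.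

Definition is_zero_obj (Z : Ob C) : Prop := idm Z = 0.

Definition is_biproduct (X Y P : Ob C) (i1 : Hom C X P) (i2 : Hom C Y P)
  (p1 : Hom C P X) (p2 : Hom C P Y) : Prop :=
  [/\ comp p1 i1 = idm X, comp p2 i2 = idm Y, comp p1 i2 = 0, comp p2 i1 = 0
    & comp i1 p1 + comp i2 p2 = idm P].

Definition abelian : Prop :=
  (exists Z, is_zero_obj Z) /\ [/\
      forall X Y, exists P i1 i2 p1 p2, @is_biproduct X Y P i1 i2 p1 p2,
      forall X Y (f : Hom C X Y), exists K (k : Hom C K X), is_kernel f k,
      forall X Y (f : Hom C X Y), exists Q (q : Hom C Y Q), is_cokernel f q,
      forall X Y (f : Hom C X Y), mono f -> exists Z (g : Hom C Y Z), is_kernel g f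
    & forall X Y (f : Hom C X Y), epi f -> exists Z (g : Hom C Z X), is_cokernel g f].

Definition injective_obj (I : Ob C) : Prop :=
  forall X Y (m : Hom C X Y) (f : Hom C X I), mono m ->
    exists g : Hom C Y I, comp g m = f.

(* Objects of A: complexes [A --f--> B --g--> C] (degrees -2,-1,0) with f
   injective (mono) and Ker g = Im f, i.e. f is a kernel of g. *)
Record AObj := {
  cA : Ob C; cB : Ob C; cC : Ob C;
  cf : Hom C cA cB; cg : Hom C cB cC;
  cf_mono : mono cf;
  c_exact : is_kernel cg cf
}.

Record CMap (X Y : AObj) := {
  m2 : Hom C (cA X) (cA Y);
  m1 : Hom C (cB X) (cB Y);
  m0 : Hom C (cC X) (cC Y)
}.

Definition is_chain X Y (u : CMap X Y) : Prop :=
  comp (m1 u) (cf X) = comp (cf Y) (m2 u) /\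
  comp (m0 u) (cg X) = comp (cg Y) (m1 u).

Definition ccomp X Y Z (v : CMap Y Z) (u : CMap X Y) : CMap X Z :=
  {| m2 := comp (m2 v) (m2 u); m1 := comp (m1 v) (m1 u); m0 := comp (m0 v) (m0 u) |}.

Definition homotopic X Y (u v : CMap X Y) : Prop :=
  exists (h1 : Hom C (cB X) (cA Y)) (h0 : Hom C (cC X) (cB Y)),
    [/\ m2 u - m2 v = comp h1 (cf X),
        m1 u - m1 v = comp (cf Y) h1 + comp h0 (cg X)
      & m0 u - m0 v = comp (cg Y) h0].

Definition A_mono X Y (u : CMap X Y) : Prop :=
  forall W (v w : CMap W X), is_chain v -> is_chain w ->
    homotopic (ccomp u v) (ccomp u w) -> homotopic v w.

Definition A_injective (E : AObj) : Prop :=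
  forall X Y (i : CMap X Y) (phi : CMap X E),
    is_chain i -> A_mono i -> is_chain phi ->
    exists psi : CMap Y E, is_chain psi /\ homotopic (ccomp psi i) phi.

End Basic.

(* Main.v *)
Require Import Defs.
From mathcomp Require Import all_boot all_algebra.
Require Import Defs.
Set Implicit Arguments. Unset Strict Implicit. Unset Printing Implicit Defensive.
Import GRing.Theory.
Local Open Scope ring_scope.

Lemma comp0r (C : PreAdd) X Y Z (g : Hom C Y Z) : comp g (0 : Hom C X Y) = 0.
Proof.
have H := compDr g (0 : Hom C X Y) 0. rewrite addr0 in H.
by apply: (addrI (comp g (0 : Hom C X Y))); rewrite addr0 -H.
Qed.

Lemma comp0l (C : PreAdd) X Y Z (f : Hom C X Y) : comp (0 : Hom C Y Z) f = 0.
Proof.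
have H := compDl (0 : Hom C Y Z) 0 f. rewrite addr0 in H.
by apply: (addrI (comp (0 : Hom C Y Z) f)); rewrite addr0 -H.
Qed.

Lemma compNl (C : PreAdd) X Y Z (g : Hom C Y Z) (f : Hom C X Y) :
  comp (- g) f = - comp g f.
Proof. by apply: (addrI (comp g f)); rewrite -compDl !subrr comp0l. Qed.

Lemma compNr (C : PreAdd) X Y Z (g : Hom C Y Z) (f : Hom C X Y) :
  comp g (- f) = - comp g f.
Proof. by apply: (addrI (comp g f)); rewrite -compDr !subrr comp0r. Qed.

Lemma compBl (C : PreAdd) X Y Z (g1 g2 : Hom C Y Z) (f : Hom C X Y) :
  comp (g1 - g2) f = comp g1 f - comp g2 f.
Proof. by rewrite compDl compNl. Qed.

Lemma compBr (C : PreAdd) X Y Z (g : Hom C Y Z) (f1 f2 : Hom C X Y) :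
  comp g (f1 - f2) = comp g f1 - comp g f2.
Proof. by rewrite compDr compNr. Qed.

Lemma ker_mono (C : PreAdd) X Y K (f : Hom C X Y) (k : Hom C K X) :
  is_kernel f k -> mono k.
Proof.
move=> [fk0 Hk] W u v Huv.
have Hf : comp f (comp k u) = 0 by rewrite compA fk0 comp0l.
case: (Hk W (comp k u) Hf) => w [_ Hw].
by rewrite (Hw u) // (Hw v).
Qed.

Lemma extend (C : PreAdd) (HC : abelian C) N Y J (s : Hom C N Y) K
  (k : Hom C K N) (psi : Hom C N J) :
  is_kernel s k -> injective_obj J -> comp psi k = 0 ->
  exists p : Hom C Y J, comp p s = psi.
Proof.
case: HC => _ [_ Hker Hcok Hmk Hepi].
move=> [sk0 Hk] HJ psik.
case: (Hcok _ _ s) => R [c [cs0 Hc]].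
case: (Hker _ _ c) => I0 [m Hm].
have mmono := ker_mono Hm.
case: Hm => cm0 Hm.
case: (Hm _ s cs0) => e [me _].
have eepi : epi e.
  move=> W u v Huv.
  suff: u - v = 0 by move/eqP; rewrite subr_eq0 => /eqP.
  set t := u - v.
  have te : comp t e = 0 by rewrite /t compBl Huv subrr.
  case: (Hker _ _ t) => K' [j [tj0 Hj]].
  case: (Hj _ e te) => e' [je' _].
  have mjmono : mono (comp m j).
    move=> W' a b H. apply: (ker_mono (conj tj0 Hj)). apply: mmono.
    by rewrite !compA.
  case: (Hmk _ _ _ mjmono) => Z [r [rmj0 Hr]].
  have rs0 : comp r s = 0.
    by rewrite -me -je' [comp m (comp j e')]compA compA rmj0 comp0l.
  case: (Hc _ r rs0) => r' [r'c _].
  have rm0 : comp r m = 0 by rewrite -r'c -compA cm0 comp0r.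
  case: (Hr _ m rm0) => w [mjw _].
  have jw : comp j w = idm _ by apply: mmono; rewrite compA mjw compm1.
  by rewrite -[t]compm1 -jw compA tj0 comp0l.
case: (Hepi _ _ e eepi) => Z [g [eg0 Hg]].
have sg0: comp s g = 0 by rewrite -me -compA eg0 comp0r.
case: (Hk _ g sg0) => u' [ku' _].
have psig0 : comp psi g = 0 by rewrite -ku' compA psik comp0l.
case: (Hg _ psi psig0) => u [ue _].
case: (HJ _ _ m u mmono) => p pm.
by exists p; rewrite -me compA pm.
Qed.

Lemma zero_to (C : PreAdd) (Z : Ob C) (HZ : is_zero_obj Z) W (u : Hom C W Z) : u = 0.
Proof. by rewrite -[u]comp1m HZ comp0l. Qed.

Lemma zW_mono (C : PreAdd) (Z : Ob C) (HZ : is_zero_obj Z) : mono (0 : Hom C Z Z).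
Proof. by move=> W u v _; rewrite (zero_to HZ u) (zero_to HZ v). Qed.

Lemma zW_exact (C : PreAdd) (Z : Ob C) (HZ : is_zero_obj Z) (K : Ob C) :
  is_kernel (0 : Hom C Z K) (0 : Hom C Z Z).
Proof.
split; first by rewrite comp0l.
move=> W h _; exists h; split; first by rewrite (zero_to HZ (comp 0 h)) (zero_to HZ h).
by move=> u' _; rewrite (zero_to HZ u') (zero_to HZ h).
Qed.

Definition testW (C : PreAdd) (Z : Ob C) (HZ : is_zero_obj Z) (K : Ob C) : AObj C :=
  {| cA := Z; cB := Z; cC := K; cf := 0; cg := 0;
     cf_mono := zW_mono HZ; c_exact := zW_exact HZ K |}.

Theorem proposition3p2 (C : PreAdd) (HC : abelian C) (E : AObj C) :
  injective_obj (cB E) -> injective_obj (cC E) -> A_injective E.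
Proof.
move=> HI HJ X Y i phi Hi Hmono Hphi.
have HC' := HC.
case: HC' => [[Z0 HZ0] [Hbip Hker Hcok Hmk Hepi]].
case: (Hbip (cB Y) (cC X)) => N [in1 [in2 [p1 [p2 [Hp1 Hp2 H12 H21 Hsum]]]]].
set s := comp (cg Y) p1 + comp (m0 i) p2.
case: (Hker _ _ s) => K [k Hk].
have kmono := ker_mono Hk.
have sk0 : comp s k = 0 by case: Hk.
have eqk : comp (cg Y) (comp p1 k) + comp (m0 i) (comp p2 k) = 0.
  by move: sk0; rewrite /s compDl -!compA.
have chain0 : forall c : Hom C K (cC X),
    is_chain (@Build_CMap C (testW HZ0 K) X 0 0 c).
  by move=> c; split => /=; rewrite ?comp0l ?comp0r.
have Hhom : homotopic (ccomp i (@Build_CMap C (testW HZ0 K) X 0 0 (comp p2 k)))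
                      (ccomp i (@Build_CMap C (testW HZ0 K) X 0 0 0)).
  exists 0, (- comp p1 k); split => /=.
  - by rewrite !comp0r ?comp0l subrr.
  - by rewrite !comp0r subrr addr0.
  - rewrite comp0r subr0 compNr; apply/eqP.
    by move/eqP: eqk; rewrite addrC addr_eq0.
have [h1' [a [_ _ Ha]]] := Hmono _ _ _ (chain0 _) (chain0 _) Hhom.
rewrite /= subr0 in Ha.
case: (HI _ _ k (- comp (m1 phi) a) kmono) => chi Hchi.
case: Hi => Hi1 Hi2.
case: Hphi => Hphi1 Hphi2.
set psi := comp (m0 phi) p2 + comp (cg E) chi.
have psik : comp psi k = 0.
  rewrite /psi compDl -!compA Ha Hchi compNr !compA Hphi2.
  by rewrite subrr.
case: (extend HC Hk HJ psik) => p Hp.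
have sin1 : comp s in1 = cg Y by rewrite /s compDl -!compA Hp1 H21 compm1 comp0r addr0.
have sin2 : comp s in2 = m0 i by rewrite /s compDl -!compA H12 Hp2 comp0r add0r compm1.
have Hp1' : comp p (cg Y) = comp (cg E) (comp chi in1).
  by rewrite -sin1 compA Hp /psi compDl -!compA H21 comp0r add0r.
have Hp2' : comp p (m0 i) = m0 phi + comp (cg E) (comp chi in2).
  by rewrite -sin2 compA Hp /psi compDl -!compA Hp2 compm1.
case: (c_exact E) => gf0E HkE.
case: (c_exact Y) => gf0Y _.
case: (c_exact X) => gf0X _.
have : comp (cg E) (comp (comp chi in1) (cf Y)) = 0.
  by rewrite compA -Hp1' -compA gf0Y comp0r.
case/HkE => psi2 [Hpsi2 _].
exists (@Build_CMap C Y E psi2 (comp chi in1) p); split.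
  by split => /=; rewrite ?Hpsi2.
set hh := comp (comp chi in1) (m1 i) - m1 phi - comp (comp chi in2) (cg X).
have : comp (cg E) hh = 0.
  have e1 : comp (cg E) (comp (comp chi in1) (m1 i)) =
     comp (m0 phi) (cg X) + comp (comp (cg E) (comp chi in2)) (cg X).
    by rewrite compA -Hp1' -compA -Hi2 compA Hp2' compDl.
  rewrite /hh !compBr e1 -Hphi2 [comp (cg E) (comp (comp chi in2) _)]compA.
  by rewrite addrAC addrK subrr.
case/HkE => h1 [Hh1 _].
exists h1, (comp chi in2); split => /=.
- apply: (@cf_mono C E).
  rewrite compBr compA Hpsi2 -Hphi1 [comp (cf E) (comp h1 _)]compA Hh1.
  rewrite -[comp (comp (comp chi in1) (cf Y)) _]compA -Hi1 compA /hh !compBl.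
  by rewrite -[comp (comp (comp chi in2) (cg X)) (cf X)]compA gf0X comp0r subr0.
- by rewrite Hh1 /hh subrK.
- by rewrite Hp2' addrC addKr.
Qed.
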